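(* Let $T$ be a split Leibniz triple system with symmetric root system $\Lambda^1$, and suppose $\Lambda^0$ is symmetric. Let $U$ be a vector space complement in $T_0$ of $\mathrm{span}_{\mathbb{K}}\{\{T_\alpha,T_\beta,T_\gamma\}:\alpha+\beta+\gamma=0,\ \alpha,\beta,\gamma\in\Lambda^1\cup\{0\}\}$. Then $$T=U+\sum_{[\alpha]\in\Lambda^1/\sim}I_{[\alpha]},$$ where $I_{[\alpha]}=T_{\Lambda^1_\alpha}=T_{0,\Lambda^1_\alpha}\oplus V_{\Lambda^1_\alpha}$ is an ideal of $T$ for each class $[\alpha]$; moreover, $\{I_{[\alpha]},T,I_{[\beta]}\}=\{I_{[\alpha]},I_{[\beta]},T\}=\{T,I_{[\alpha]},I_{[\beta]}\}=0$ whenever $[\alpha]\neq[\beta]$.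
   Context: A Leibniz triple system is a vector space $T$ over a field $\mathbb{K}$ with a trilinear product $\{\cdot,\cdot,\cdot\}$ satisfying, for all $a,b,c,d,e\in T$: $\{a,\{b,c,d\},e\}=\{\{a,b,c\},d,e\}-\{\{a,c,b\},d,e\}-\{\{a,d,b\},c,e\}+\{\{a,d,c\},b,e\}$ and $\{a,b,\{c,d,e\}\}=\{\{a,b,c\},d,e\}-\{\{a,b,d\},c,e\}-\{\{a,b,e\},c,d\}+\{\{a,b,e\},d,c\}$. An ideal of $T$ is a subspace $I$ with $\{I,T,T\}+\{T,I,T\}+\{T,T,I\}\subseteq I$. Its standard embedding is the right Leibniz algebra $L=L^0\oplus L^1$ ($L^0$ the span of symbols $x\otimes y$, $L^1=T$) with product $[(x\otimes y,z),(u\otimes v,w)]=(\{x,y,u\}\otimes v-\{x,y,v\}\otimes u+z\otimes w,\ \{x,y,w\}+\{z,u,v\}-\{z,v,u\})$; so $[x,y]=x\otimes y$ and $\{x,y,z\}=[[x,y],z]$ for $x,y,z\in T$. Let $H^0$ be a maximal abelian subalgebra of $L^0$; for $\alpha\in(H^0)^*$ put $T_\alpha=\{t\in T:[t,h]=\alpha(h)t\ \forall h\in H^0\}$, $L^0_\alpha=\{v\in L^0:[v,h]=\alpha(h)v\ \forall h\in H^0\}$, $\Lambda^1=\{\alpha\neq0:T_\alpha\neq0\}$, $\Lambda^0=\{\alpha\neq0:L^0_\alpha\neq0\}$. $T$ is split (w.r.t. $H^0$) if $T=T_0\oplus\bigoplus_{\alpha\in\Lambda^1}T_\alpha$, $\{T_0,T_0,T_0\}=0$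 and $\{T_\alpha,T_{-\alpha},T_0\}=0$ for all $\alpha\in\Lambda^1$. A set $\Lambda\subset(H^0)^*$ is symmetric if $\alpha\in\Lambda$ implies $-\alpha\in\Lambda$. Two roots $\alpha,\beta\in\Lambda^1$ are connected if there is a family $\alpha_1,\dots,\alpha_{2n+1}\in\Lambda^1\cup\{0\}$ with: $\alpha_1+\dots+\alpha_{2k+1}\in\Lambda^1$ for $k=0,\dots,n$; $\alpha_1+\dots+\alpha_{2k}\in\Lambda^0$ for $k=1,\dots,n$; $\alpha_1=\alpha$ and $\alpha_1+\dots+\alpha_{2n+1}\in\{\beta,-\beta\}$. $\Lambda^1_\alpha$ is the set of $\beta\in\Lambda^1$ connected with $\alpha$; $\alpha\sim\beta$ iff $\beta\in\Lambda^1_\alpha$ (an equivalence relation on $\Lambda^1$ when $\Lambda^0$ is symmetric), and $[\alpha]$ is the class of $\alpha$. For $\alpha\in\Lambda^1$: $T_{0,\Lambda^1_\alpha}=\mathrm{span}_{\mathbb{K}}\{\{T_{\beta_1},T_{\beta_2},T_{\beta_3}\}:\beta_1+\beta_2+\beta_3=0,\ \beta_i\in\Lambda^1_\alpha\cup\{0\}\}$ and $V_{\Lambda^1_\alpha}=\bigoplus_{\gamma\in\Lambda^1_\alpha}T_\gamma$. *)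

(* Defs.v *)
From HB Require Import structures.
From mathcomp Require Import all_boot all_order all_algebra.
Set Implicit Arguments. Unset Strict Implicit. Unset Printing Implicit Defensive.
Import GRing.Theory.
Local Open Scope ring_scope.

(* list membership in Prop (no eqType needed) *)
Fixpoint Lin (A : Type) (x : A) (s : seq A) : Prop :=
  match s with [::] => False | y :: s' => y = x \/ Lin x s' end.

Section LinAlg.
Variable K : fieldType.

Definition subspace (V : lmodType K) (P : V -> Prop) : Prop :=
  [/\ P 0, (forall x y, P x -> P y -> P (x + y)) & (forall (a : K) x, P x -> P (a *: x))].

Definition kspan (V : lmodType K) (P : V -> Prop) (v : V) : Prop :=
  exists s : seq (K * V), (forall p, Lin p s -> P p.2) /\ v = \sum_(p <- s) p.1 *: p.2.

Definition lin_map (V W : lmodType K) (g : V -> W) : Prop :=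
  forall (a : K) x y, g (a *: x + y) = a *: g x + g y.

Definition bilin_map (U V W : lmodType K) (f : U -> V -> W) : Prop :=
  (forall (a : K) x x' y, f (a *: x + x') y = a *: f x y + f x' y) /\
  (forall (a : K) x y y', f x (a *: y + y') = a *: f x y + f x y').
End LinAlg.

Section LTS.
Variable K : fieldType.
Variable T : lmodType K.
Variable trip : T -> T -> T -> T.

Definition trilinear : Prop :=
  [/\ (forall (a : K) x x' y z, trip (a *: x + x') y z = a *: trip x y z + trip x' y z),
      (forall (a : K) x y y' z, trip x (a *: y + y') z = a *: trip x y z + trip x y' z) &
      (forall (a : K) x y z z', trip x y (a *: z + z') = a *: trip x y z + trip x y z')].

Definition leibniz_triple : Prop :=
  [/\ trilinear,
      (forall a b c d e, trip a (trip b c d) e =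
          trip (trip a b c) d e - trip (trip a c b) d e
        - trip (trip a d b) c e + trip (trip a d c) b e) &
      (forall a b c d e, trip a b (trip c d e) =
          trip (trip a b c) d e - trip (trip a b d) c e
        - trip (trip a b e) c d + trip (trip a b e) d c)].

Definition ideal (I : T -> Prop) : Prop :=
  subspace I /\ forall x y z, I x -> [/\ I (trip x y z), I (trip y x z) & I (trip y z x)].

(* The defining relations of L^0 = (T (x) T) / span{ a(x){b,c,d} - ({a,b,c}(x)d
   - {a,c,b}(x)d - {a,d,b}(x)c + {a,d,c}(x)b) } *)
Definition tens_rel (W : lmodType K) (f : T -> T -> W) : Prop :=
  forall a b c d, f a (trip b c d) =
    f (trip a b c) d - f (trip a c b) d - f (trip a d b) c + f (trip a d c) b.

(* (L0, tens) is L^0 (characterised by its universal property), br0 is the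
   product of L^0 with itself, and act t v = [t, v] for t in L^1 = T, v in L^0. *)
Definition standard_embedding (L0 : lmodType K) (tens : T -> T -> L0)
    (br0 : L0 -> L0 -> L0) (act : T -> L0 -> T) : Prop :=
  [/\ bilin_map tens /\ tens_rel tens,
      (forall v : L0, kspan (fun w => exists x y, w = tens x y) v),
      (forall (W : lmodType K) (f : T -> T -> W), bilin_map f -> tens_rel f ->
         exists g : L0 -> W, lin_map g /\ forall x y, g (tens x y) = f x y),
      bilin_map br0 /\ (forall x y u v,
         br0 (tens x y) (tens u v) = tens (trip x y u) v - tens (trip x y v) u) &
      bilin_map act /\ (forall t x y, act t (tens x y) = trip t x y - trip t y x)].

Section Roots.
Variables (L0 : lmodType K) (br0 : L0 -> L0 -> L0) (act : T -> L0 -> T).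

Definition abelian_subalg (H : L0 -> Prop) : Prop :=
  [/\ subspace H, (forall h h', H h -> H h' -> H (br0 h h'))
    & (forall h h', H h -> H h' -> br0 h h' = 0)].

Definition max_abelian (H : L0 -> Prop) : Prop :=
  abelian_subalg H /\
  forall H' : L0 -> Prop, abelian_subalg H' -> (forall h, H h -> H' h) ->
    forall h, H' h -> H h.

Variable H0 : L0 -> Prop.

(* elements of (H^0)^* are represented as functions H^0 -> K *)
Definition wt := {h : L0 | H0 h} -> K.
Definition w0 : wt := fun _ => 0.
Definition wadd (a b : wt) : wt := fun h => a h + b h.
Definition wopp (a : wt) : wt := fun h => - a h.

Definition Tsp (a : wt) (t : T) : Prop := forall h : {h : L0 | H0 h}, act t (sval h) = a h *: t.
Definition Lsp (a : wt) (v : L0) : Prop := forall h : {h : L0 | H0 h}, br0 v (sval h) = a h *: v.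

Definition Lam1 (a : wt) : Prop := a <> w0 /\ exists t, t <> 0 /\ Tsp a t.
Definition Lam0 (a : wt) : Prop := a <> w0 /\ exists v, v <> 0 /\ Lsp a v.
Definition Lam1z (a : wt) : Prop := Lam1 a \/ a = w0.

Definition symmetric_set (P : wt -> Prop) : Prop := forall a, P a -> P (wopp a).

Definition split_LTS : Prop :=
  [/\ (forall t, exists s : seq (wt * T),
          (forall p, Lin p s -> Lam1z p.1 /\ Tsp p.1 p.2) /\ t = \sum_(p <- s) p.2),
      (forall s : seq (wt * T),
          (forall p, Lin p s -> Lam1z p.1 /\ Tsp p.1 p.2) ->
          (forall i j, (i < size s)%N -> (j < size s)%N -> i <> j ->
              (nth (w0, 0) s i).1 <> (nth (w0, 0) s j).1) ->
          \sum_(p <- s) p.2 = 0 -> forall p, Lin p s -> p.2 = 0),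
      (forall x y z, Tsp w0 x -> Tsp w0 y -> Tsp w0 z -> trip x y z = 0) &
      (forall a, Lam1 a -> forall x y z, Tsp a x -> Tsp (wopp a) y -> Tsp w0 z ->
          trip x y z = 0)].

Fixpoint psum (a : nat -> wt) (k : nat) : wt :=
  match k with 0 => w0 | k'.+1 => wadd (psum a k') (a k'.+1) end.

Definition connected (al be : wt) : Prop :=
  [/\ Lam1 al, Lam1 be &
   exists (n : nat) (a : nat -> wt),
    [/\ a 1%N = al,
        (forall i, (1 <= i <= n.*2.+1)%N -> Lam1z (a i)),
        (forall k, (k <= n)%N -> Lam1 (psum a k.*2.+1)),
        (forall k, (1 <= k <= n)%N -> Lam0 (psum a k.*2)) &
        (psum a n.*2.+1 = be \/ psum a n.*2.+1 = wopp be)]].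

Definition Lam1_of (al : wt) (be : wt) : Prop := Lam1 be /\ connected al be.

Definition zero_span (P : wt -> Prop) : T -> Prop :=
  kspan (fun t => exists (b1 b2 b3 : wt) (x y z : T),
    [/\ (P b1 \/ b1 = w0) /\ (P b2 \/ b2 = w0) /\ (P b3 \/ b3 = w0),
        wadd (wadd b1 b2) b3 = w0,
        Tsp b1 x /\ Tsp b2 y /\ Tsp b3 z &
        t = trip x y z]).

Definition T0_Lam (al : wt) : T -> Prop := zero_span (Lam1_of al).
Definition V_Lam (al : wt) : T -> Prop := kspan (fun t => exists g, Lam1_of al g /\ Tsp g t).

Definition I_cls (al : wt) (t : T) : Prop :=
  exists t0 v, [/\ T0_Lam al t0, V_Lam al v & t = t0 + v].

End Roots.
End LTS.

Arguments w0 {K L0} H0 _.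
Arguments wadd {K L0 H0} a b _.
Arguments wopp {K L0 H0} a _.
Arguments symmetric_set {K L0} H0 P.
Arguments Tsp {K T L0} act H0 a t.
Arguments Lsp {K L0} br0 H0 a v.
Arguments Lam1 {K T L0} act H0 a.
Arguments Lam0 {K L0} br0 H0 a.
Arguments Lam1z {K T L0} act H0 a.
Arguments psum {K L0 H0} a k _.
Arguments connected {K T L0} br0 act H0 al be.
Arguments Lam1_of {K T L0} br0 act H0 al be.
Arguments zero_span {K T} trip {L0} act H0 P t.
Arguments T0_Lam {K T} trip {L0} br0 act H0 al t.
Arguments V_Lam {K T L0} br0 act H0 al t.
Arguments I_cls {K T} trip {L0} br0 act H0 al t.
Arguments split_LTS {K T} trip {L0} act H0.
Arguments max_abelian {K L0} br0 H.
Arguments abelian_subalg {K L0} br0 H.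
Arguments standard_embedding {K T} trip {L0} tens br0 act.

(* Main.v *)
Require Import Defs.
From HB Require Import structures.
From mathcomp Require Import all_boot all_order all_algebra.
From mathcomp Require Import zify ssrAC ring.
From Stdlib Require Import FunctionalExtensionality PropExtensionality Classical.
Set Implicit Arguments. Unset Strict Implicit. Unset Printing Implicit Defensive.
Import GRing.Theory.
Local Open Scope ring_scope.


Section LinGen.
Variables (K : fieldType) (V W : lmodType K).

Lemma lin0 (f : V -> W) : lin_map f -> f 0 = 0.
Proof.
move=> hf; have := hf 1 0 0; rewrite scale1r addr0 scale1r => e.
by apply/(addrI (f 0)); rewrite addr0 -e.
Qed.

Lemma linD (f : V -> W) : lin_map f -> forall x y, f (x + y) = f x + f y.
Proof. by move=> hf x y; have := hf 1 x y; rewrite !scale1r. Qed.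

Lemma linZ (f : V -> W) : lin_map f -> forall a x, f (a *: x) = a *: f x.
Proof. by move=> hf a x; have := hf a x 0; rewrite !addr0 (lin0 hf) addr0. Qed.

Lemma linN (f : V -> W) : lin_map f -> forall x, f (- x) = - f x.
Proof. by move=> hf x; rewrite -scaleN1r (linZ hf) scaleN1r. Qed.

Lemma linB (f : V -> W) : lin_map f -> forall x y, f (x - y) = f x - f y.
Proof. by move=> hf x y; rewrite (linD hf) (linN hf). Qed.

Lemma lin_sum (f : V -> W) (I : Type) (s : seq I) (F : I -> V) : lin_map f ->
  f (\sum_(i <- s) F i) = \sum_(i <- s) f (F i).
Proof.
move=> hf; elim: s => [|i s IH]; first by rewrite !big_nil (lin0 hf).
by rewrite !big_cons (linD hf) IH.
Qed.

End LinGen.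

Lemma Lin_cat (A : Type) (p : A) s1 s2 : Lin p (s1 ++ s2) <-> Lin p s1 \/ Lin p s2.
Proof.
elim: s1 => [|q s1 IH] /=; first tauto.
move: IH; tauto.
Qed.

Lemma Lin_map (A B : Type) (f : A -> B) (p : B) s :
  Lin p (map f s) -> exists q, Lin q s /\ p = f q.
Proof.
elim: s => [|q s IH] //= [<-|/IH [r [h ->]]]; first by exists q; split; [left|].
by exists r; split; [right|].
Qed.

Section Span.
Variables (K : fieldType) (V : lmodType K) (P : V -> Prop).

Lemma kspan0 : kspan P 0.
Proof. by exists [::]; split => //; rewrite big_nil. Qed.

Lemma kspanD x y : kspan P x -> kspan P y -> kspan P (x + y).
Proof.
move=> [s1 [h1 ->]] [s2 [h2 ->]]; exists (s1 ++ s2); split; last by rewrite big_cat.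
by move=> p /Lin_cat [/h1|/h2].
Qed.

Lemma kspanZ a x : kspan P x -> kspan P (a *: x).
Proof.
move=> [s [h ->]]; exists (map (fun p => (a * p.1, p.2)) s); split.
  by move=> p hp; have [q [hq ->]] := Lin_map hp; exact: (h _ hq).
by rewrite big_map scaler_sumr; apply: eq_bigr => p _; rewrite scalerA.
Qed.

Lemma kspan1 x : P x -> kspan P x.
Proof.
move=> hx; exists [:: (1, x)]; split; last by rewrite big_cons big_nil scale1r addr0.
by move=> p [<-|].
Qed.

Lemma kspan_sub : subspace (kspan P).
Proof. split; [exact: kspan0 | exact: kspanD | exact: kspanZ]. Qed.

Lemma kspan_ind (Q : V -> Prop) : subspace Q -> (forall x, P x -> Q x) ->
  forall v, kspan P v -> Q v.
Proof.
move=> [Q0 QD QZ] hPQ v [s [hs ->]]; elim: s hs => [|p s IH] hs.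
  by rewrite big_nil.
rewrite big_cons; apply: QD; first by apply: QZ; apply: hPQ; apply: hs; left.
by apply: IH => q hq; apply: hs; right.
Qed.

Lemma sub_sum (Q : V -> Prop) (I : Type) (s : seq I) (F : I -> V) : subspace Q ->
  (forall i, Lin i s -> Q (F i)) -> Q (\sum_(i <- s) F i).
Proof.
move=> [Q0 QD QZ]; elim: s => [|i s IH] h; first by rewrite big_nil.
rewrite big_cons; apply: QD; first by apply: h; left.
by apply: IH => j hj; apply: h; right.
Qed.

End Span.

Lemma Z1 (V : zmodType) (A B C D E F : V) :
  A - E = (F - D) + ((A - B - C + D) - (E - C - B + F)).
Proof.
rewrite !opprD !opprK !addrA.
rewrite [RHS](ACl ((3*7)*((1*10)*((6*2)*((8*5)*(9*4)))))%AC) /=.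
by rewrite !subrr !addr0.
Qed.

Lemma Z2 (V : zmodType) (P1 P2 Q1 R1 S1 S2 : V) :
  P1 - P2 = ((P1 - Q1 - R1 + S1) - (P2 - R1 - Q1 + S2)) + (S2 - S1).
Proof.
rewrite !opprD !opprK !addrA.
rewrite [RHS](ACl ((1*5)*((7*2)*((6*3)*((9*8)*(4*10)))))%AC) /=.
by rewrite !subrr !addr0.
Qed.


Section Main.
Variables (K : fieldType) (T : lmodType K) (trip : T -> T -> T -> T)
    (L0 : lmodType K) (tens : T -> T -> L0) (br0 : L0 -> L0 -> L0)
    (act : T -> L0 -> T) (H0 : L0 -> Prop).
Hypothesis HL : leibniz_triple trip.
Hypothesis HS : standard_embedding trip tens br0 act.
Hypothesis Hsp : split_LTS trip act H0.
Hypothesis Hs1 : symmetric_set H0 (Lam1 act H0).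
Hypothesis Hs0 : symmetric_set H0 (Lam0 br0 H0).

Local Notation W := (wt H0).
Local Notation W0 := (w0 H0).
Local Notation Tsp := (Tsp act H0).
Local Notation Lsp := (Lsp br0 H0).
Local Notation Lam1 := (Lam1 act H0).
Local Notation Lam0 := (Lam0 br0 H0).
Local Notation Lam1z := (Lam1z act H0).
Local Notation connected := (connected br0 act H0).

Lemma wext (a b : W) : (forall h, a h = b h) -> a = b.
Proof. exact: functional_extensionality. Qed.

Lemma waddC (a b : W) : wadd a b = wadd b a.
Proof. by apply: wext => h; rewrite /wadd addrC. Qed.
Lemma waddA (a b c : W) : wadd a (wadd b c) = wadd (wadd a b) c.
Proof. by apply: wext => h; rewrite /wadd addrA. Qed.
Lemma wadd0 (a : W) : wadd W0 a = a.
Proof. by apply: wext => h; rewrite /wadd /w0 add0r. Qed.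
Lemma waddw0 (a : W) : wadd a W0 = a.
Proof. by apply: wext => h; rewrite /wadd /w0 addr0. Qed.
Lemma waddN (a : W) : wadd a (wopp a) = W0.
Proof. by apply: wext => h; rewrite /wadd /wopp /w0 subrr. Qed.
Lemma woppK (a : W) : wopp (wopp a) = a.
Proof. by apply: wext => h; rewrite /wopp opprK. Qed.
Lemma wopp0 : wopp W0 = W0.
Proof. by apply: wext => h; rewrite /wopp /w0 oppr0. Qed.
Lemma woppD (a b : W) : wopp (wadd a b) = wadd (wopp a) (wopp b).
Proof. by apply: wext => h; rewrite /wopp /wadd opprD. Qed.
Lemma wadd_eq0 (a b : W) : wadd a b = W0 -> b = wopp a.
Proof.
move=> e; apply: wext => h; have := congr1 (fun f => f h) e.
rewrite /wadd /w0 /wopp => /eqP; rewrite addr_eq0 => /eqP ->.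
by rewrite opprK.
Qed.
Lemma wopp_eq0 (a : W) : wopp a = W0 -> a = W0.
Proof. by move=> e; rewrite -(woppK a) e wopp0. Qed.

Lemma tL1 y z : lin_map (fun x => trip x y z).
Proof. by case: HL => [[h _ _] _ _] a x x'; apply: h. Qed.
Lemma tL2 x z : lin_map (fun y => trip x y z).
Proof. by case: HL => [[_ h _] _ _] a y y'; apply: h. Qed.
Lemma tL3 x y : lin_map (trip x y).
Proof. by case: HL => [[_ _ h] _ _] a z z'; apply: h. Qed.
Lemma Lid1 a b c d e : trip a (trip b c d) e =
          trip (trip a b c) d e - trip (trip a c b) d e
        - trip (trip a d b) c e + trip (trip a d c) b e.
Proof. by case: HL. Qed.
Lemma Lid2 a b c d e : trip a b (trip c d e) =
          trip (trip a b c) d e - trip (trip a b d) c e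
        - trip (trip a b e) c d + trip (trip a b e) d c.
Proof. by case: HL. Qed.

Lemma trip0l y z : trip 0 y z = 0. Proof. exact: (lin0 (tL1 y z)). Qed.
Lemma trip0m x z : trip x 0 z = 0. Proof. exact: (lin0 (tL2 x z)). Qed.
Lemma trip0r x y : trip x y 0 = 0. Proof. exact: (lin0 (tL3 x y)). Qed.

Lemma tensL1 y : lin_map (fun x => tens x y).
Proof. by case: HS => [[[h _] _] _ _ _ _] a x x'; apply: h. Qed.
Lemma tensL2 x : lin_map (tens x).
Proof. by case: HS => [[[_ h] _] _ _ _ _] a y y'; apply: h. Qed.
Lemma tensR a b c d : tens a (trip b c d) =
    tens (trip a b c) d - tens (trip a c b) d - tens (trip a d b) c + tens (trip a d c) b.
Proof. by case: HS => [[_ h] _ _ _ _]; apply: h. Qed.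
Lemma br0L2 u : lin_map (br0 u).
Proof. by case: HS => [_ _ _ [[_ h] _] _] a x x'; apply: h. Qed.
Lemma br0E x y u v :
  br0 (tens x y) (tens u v) = tens (trip x y u) v - tens (trip x y v) u.
Proof. by case: HS => [_ _ _ [_ h] _]; apply: h. Qed.
Lemma actL2 t : lin_map (act t).
Proof. by case: HS => [_ _ _ _ [[_ h] _]] a x x'; apply: h. Qed.
Lemma actL1 v : lin_map (fun t => act t v).
Proof. by case: HS => [_ _ _ _ [[h _] _]] a x x'; apply: h. Qed.
Lemma actE t x y : act t (tens x y) = trip t x y - trip t y x.
Proof. by case: HS => [_ _ _ _ [_ h]]; apply: h. Qed.

Lemma lin_ext (V : lmodType K) (F G : L0 -> V) : lin_map F -> lin_map G ->
  (forall u w, F (tens u w) = G (tens u w)) -> forall v, F v = G v.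
Proof.
move=> hF hG e v; case: HS => [_ hsp _ _ _]; have [s [hs ->]] := hsp v.
elim: s hs => [|p s IH] hs; first by rewrite big_nil (lin0 hF) (lin0 hG).
rewrite big_cons (linD hF) (linD hG) (linZ hF) (linZ hG) IH; last first.
  by move=> q hq; apply: hs; right.
have [x [y ->]] := hs p (or_introl erefl).
by rewrite e.
Qed.

Lemma gz_exists z : exists g : L0 -> T, lin_map g /\ forall p q, g (tens p q) = trip p q z.
Proof.
case: HS => [_ _ hu _ _]; apply: hu.
  split=> a x x' y; [exact: (tL1 y z) | exact: (tL2 x z)].
by move=> a b c d; apply: Lid1.
Qed.

Lemma G1 x y v : br0 (tens x y) v = tens (act x v) y + tens x (act y v).
Proof.
apply: (@lin_ext _ (br0 (tens x y)) (fun v => tens (act x v) y + tens x (act y v)) (br0L2 _)).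
  move=> a v1 v2 /=; rewrite (actL2 x) (actL2 y) (tensL1 y) (tensL2 x).
  by rewrite scalerDr addrACA.
move=> u w; rewrite br0E !actE (linB (tensL1 y)) (linB (tensL2 x)) !tensR.
exact: Z1.
Qed.

Lemma G2 x y z g : lin_map g -> (forall p q, g (tens p q) = trip p q z) ->
  forall v, act (trip x y z) v = trip x y (act z v) + g (br0 (tens x y) v).
Proof.
move=> hg hgE.
apply: (@lin_ext _ (act (trip x y z)) (fun v => trip x y (act z v) + g (br0 (tens x y) v)) (actL2 _)).
  move=> a v1 v2 /=; rewrite (actL2 z) (tL3 x y) (br0L2 (tens x y)) hg.
  by rewrite scalerDr addrACA.
move=> u w; rewrite !actE br0E (linB hg) !hgE (linB (tL3 x y)) !Lid2.
exact: Z2.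
Qed.


Lemma Tsp_sub a : subspace (Tsp a).
Proof.
split.
- by move=> h; rewrite (lin0 (actL1 _)) scaler0.
- by move=> x y hx hy h; rewrite (linD (actL1 _)) hx hy scalerDr.
- by move=> c x hx h; rewrite (linZ (actL1 _)) hx !scalerA mulrC.
Qed.

Lemma tens_w a b x y : Tsp a x -> Tsp b y -> Lsp (wadd a b) (tens x y).
Proof.
move=> hx hy h; rewrite G1 hx hy (linZ (tensL1 y)) (linZ (tensL2 x)).
by rewrite /wadd scalerDl.
Qed.

Lemma trip_w a b c x y z : Tsp a x -> Tsp b y -> Tsp c z ->
  Tsp (wadd (wadd a b) c) (trip x y z).
Proof.
move=> hx hy hz h; have [g [hg hgE]] := gz_exists z.
rewrite (G2 x y hg hgE) hz (tens_w hx hy) (linZ hg) hgE (linZ (tL3 x y)).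
by rewrite /wadd -scalerDl addrC.
Qed.

Lemma tens0_trip x y z : tens x y = 0 -> trip x y z = 0.
Proof.
move=> e; have [g [hg hgE]] := gz_exists z.
by rewrite -hgE e (lin0 hg).
Qed.

Lemma tens0_swap x y z : tens y z = 0 -> trip x y z = trip x z y.
Proof.
move=> e; have := actE x y z; rewrite e (lin0 (actL2 x)) => /eqP.
by rewrite eq_sym subr_eq0 => /eqP.
Qed.

Lemma Lam1z_vec w t : Tsp w t -> t <> 0 -> Lam1z w.
Proof.
move=> ht t0; case: (classic (w = W0)) => [->|nw]; first by right.
by left; split => //; exists t.
Qed.

Lemma Lam1_vec w t : Tsp w t -> t <> 0 -> w <> W0 -> Lam1 w.
Proof. by move=> ht t0 nw; split => //; exists t. Qed.

Lemma Lam0_tens a b x y : Tsp a x -> Tsp b y -> tens x y <> 0 -> wadd a b <> W0 ->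
  Lam0 (wadd a b).
Proof. by move=> hx hy ne nw; split => //; exists (tens x y); split => //; apply: tens_w. Qed.

Lemma Lam1z_opp a : Lam1z a -> Lam1z (wopp a).
Proof. by case=> [/Hs1 h|->]; [left|right; rewrite wopp0]. Qed.

Lemma Lam1_neq0 a : Lam1 a -> a <> W0.
Proof. by case. Qed.

Lemma wadd_subK (x y : W) : wadd (wadd x y) (wopp x) = y.
Proof. by apply: wext => h; rewrite /wadd /wopp addrAC subrr add0r. Qed.
Lemma wadd_Ksub (x y : W) : wadd x (wadd y (wopp x)) = y.
Proof. by apply: wext => h; rewrite /wadd /wopp addrCA subrr addr0. Qed.
Lemma wsub_opp (x y : W) : wadd x (wopp y) = wopp (wadd y (wopp x)).
Proof. by apply: wext => h; rewrite /wadd /wopp opprD opprK addrC. Qed.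

Definition chain (al be : W) := exists n (s : nat -> W), [/\ s 1%N = al,
  (forall i, (2 <= i <= n.*2.+1)%N -> Lam1z (wadd (s i) (wopp (s i.-1)))),
  (forall k, (k <= n)%N -> Lam1 (s k.*2.+1)),
  (forall k, (1 <= k <= n)%N -> Lam0 (s k.*2)) &
  (s n.*2.+1 = be \/ s n.*2.+1 = wopp be)].

Lemma conn_chain al be : connected al be <-> [/\ Lam1 al, Lam1 be & chain al be].
Proof.
split.
  case=> h1 h2 [n [a [a1 hz h1s h0s hf]]]; split => //.
  exists n, (psum a); split => //.
  - by rewrite /= a1 wadd0.
  - move=> [|[|i]] hi //=; rewrite wadd_subK; apply: hz; lia.
case=> h1 h2 [n [s [s1 hz h1s h0s hf]]]; split => //.
pose a i := if i == 1%N then al else wadd (s i) (wopp (s i.-1)).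
have ps : forall i, psum a i.+1 = s i.+1.
  elim=> [|i IH]; first by rewrite /= /a /= wadd0 s1.
  by rewrite /= -/(psum a i.+1) IH /a /= wadd_Ksub.
exists n, a; split.
- by rewrite /a.
- move=> [|[|i]] hi //=; first by left; rewrite /a.
  by rewrite /a /=; apply: hz; lia.
- by move=> k hk; rewrite ps; apply: h1s.
- move=> [|k] hk //; rewrite doubleS ps; exact: (h0s k.+1 hk).
- by rewrite ps.
Qed.

Definition eb (b : bool) (x : W) := if b then wopp x else x.
Lemma ebK b x : eb b (eb b x) = x. Proof. by case: b => //=; rewrite woppK. Qed.
Lemma eb_Lam1 b x : Lam1 x -> Lam1 (eb b x). Proof. by case: b => //= /Hs1. Qed.
Lemma eb_Lam0 b x : Lam0 x -> Lam0 (eb b x). Proof. by case: b => //= /Hs0. Qed.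
Lemma eb_Lam1z b x : Lam1z x -> Lam1z (eb b x). Proof. by case: b => //= /Lam1z_opp. Qed.
Lemma eb_sub b x y : eb b (wadd x (wopp y)) = wadd (eb b x) (wopp (eb b y)).
Proof. by case: b => //=; rewrite woppD. Qed.
Lemma eb_pm b x : eb b x = x \/ eb b x = wopp x. Proof. by case: b; [right|left]. Qed.
Lemma pm_eb x y : (x = y \/ x = wopp y) -> exists b, x = eb b y.
Proof. by case=> ->; [exists false | exists true]. Qed.
Lemma eb_eb b b' x : exists b'', eb b (eb b' x) = eb b'' x.
Proof. case: b; case: b' => /=; by [exists false; rewrite woppK|exists true|exists true|exists false]. Qed.

Lemma chain_sym al be : chain al be -> chain be al.
Proof.
case=> n [s [s1 hz h1s h0s /pm_eb [b hb]]].
exists n, (fun k => eb b (s (n.*2.+2 - k)%N)); split.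
- by rewrite (_ : (n.*2.+2 - 1 = n.*2.+1)%N); [rewrite hb ebK | lia].
- move=> i hi; set j := (n.*2.+3 - i)%N.
  rewrite (_ : (n.*2.+2 - i = j.-1)%N); last by rewrite /j; lia.
  rewrite (_ : (n.*2.+2 - i.-1 = j)%N); last by rewrite /j; lia.
  rewrite -eb_sub wsub_opp; apply/eb_Lam1z/Lam1z_opp/hz; rewrite /j; lia.
- move=> k hk; rewrite (_ : (n.*2.+2 - k.*2.+1 = (n - k).*2.+1)%N); last by lia.
  by apply/eb_Lam1/h1s; lia.
- move=> k hk; rewrite (_ : (n.*2.+2 - k.*2 = (n - k).+1.*2)%N); last by lia.
  by apply/eb_Lam0/h0s; lia.
- by rewrite (_ : (n.*2.+2 - n.*2.+1 = 1)%N) ?s1; [apply: eb_pm | lia].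
Qed.

Lemma chain_trans al be ce : chain al be -> chain be ce -> chain al ce.
Proof.
case=> n [s [s1 hz h1s h0s /pm_eb [b hb]]].
case=> m [t [t1 tz t1s t0s /pm_eb [b' hb']]].
pose u k := if (k <= n.*2.+1)%N then s k else eb b (t (k - n.*2)%N).
have uS : forall k, (k <= n.*2.+1)%N -> u k = s k.
  by move=> k hk; rewrite /u hk.
have uT : forall k, (n.*2.+1 <= k)%N -> u k = eb b (t (k - n.*2)%N).
  move=> k hk; rewrite /u; case: ifP => hk2; last by [].
  have -> : k = n.*2.+1 by lia.
  by rewrite (_ : (n.*2.+1 - n.*2 = 1)%N) ?t1 //; lia.
exists (n + m)%N, u; split.
- by rewrite uS ?s1 //; lia.
- move=> i hi; case: (leqP i n.*2.+1) => hi2.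
    by rewrite !uS; [apply: hz; lia | lia | lia].
  rewrite !uT; [|lia|lia].
  rewrite (_ : (i.-1 - n.*2 = (i - n.*2).-1)%N); last by lia.
  by rewrite -eb_sub; apply/eb_Lam1z/tz; lia.
- move=> k hk; case: (leqP k n) => hk2.
    by rewrite uS; [apply: h1s | lia].
  rewrite uT; last by lia.
  by rewrite (_ : (k.*2.+1 - n.*2 = (k - n).*2.+1)%N); [apply/eb_Lam1/t1s; lia | lia].
- move=> k hk; case: (leqP k n) => hk2.
    by rewrite uS; [apply: h0s; lia | lia].
  rewrite uT; last by lia.
  by rewrite (_ : (k.*2 - n.*2 = (k - n).*2)%N); [apply/eb_Lam0/t0s; lia | lia].
- rewrite uT; last by lia.
  rewrite (_ : ((n + m).*2.+1 - n.*2 = m.*2.+1)%N); last by lia.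
  rewrite hb'; have [b2 ->] := eb_eb b b' ce; apply: eb_pm.
Qed.

Lemma conn_sym a b : connected a b -> connected b a.
Proof. by move/conn_chain => [h1 h2 hc]; apply/conn_chain; split => //; apply: chain_sym. Qed.

Lemma conn_trans a b c : connected a b -> connected b c -> connected a c.
Proof.
move/conn_chain => [h1 h2 hc] /conn_chain [_ h3 hc'].
by apply/conn_chain; split => //; apply: chain_trans hc'.
Qed.

Lemma conn_Lam1l a b : connected a b -> Lam1 a. Proof. by case. Qed.
Lemma conn_Lam1r a b : connected a b -> Lam1 b. Proof. by case. Qed.

Lemma conn_refl a : Lam1 a -> connected a a.
Proof.
move=> h; apply/conn_chain; split => //; exists 0%N, (fun _ => a); split.
- by [].
- by move=> i; lia.
- by move=> k _.
- by move=> k; lia.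
- by left.
Qed.

Lemma conn_opp a : Lam1 a -> connected a (wopp a).
Proof.
move=> h; apply/conn_chain; split => //; first exact: Hs1.
exists 0%N, (fun _ => a); split.
- by [].
- by move=> i; lia.
- by move=> k _.
- by move=> k; lia.
- by right; rewrite woppK.
Qed.

Lemma conn3 u v w : Lam1 u -> Lam1z v -> Lam1z w -> Lam0 (wadd u v) ->
  Lam1 (wadd (wadd u v) w) -> connected u (wadd (wadd u v) w).
Proof.
move=> hu hv hw h0 h1; apply/conn_chain; split => //.
exists 1%N, (fun i => if i is 1%N then u else if i is 2%N then wadd u v else wadd (wadd u v) w).
split => //.
- move=> [|[|[|[|i]]]] hi //=; rewrite wadd_subK //; lia.
- by move=> [|[|k]] hk //=; lia.
- by move=> [|[|k]] hk //=; lia.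
- by left.
Qed.

Lemma conn_pair u v : Lam1 u -> Lam1 v -> (wadd u v = W0 \/ Lam0 (wadd u v)) ->
  connected u v.
Proof.
move=> hu hv [/wadd_eq0 ->|h0]; first exact: conn_opp.
rewrite -[X in connected _ X](wadd_subK u v); apply: conn3 => //.
- by left.
- by left; apply: Hs1.
- by rewrite wadd_subK.
Qed.

Definition ok (H w : W) := w = W0 \/ connected H w.

Lemma Lam0_neq0 a : Lam0 a -> a <> W0. Proof. by case. Qed.

Lemma hub_aux u v r : Lam1 u -> Lam1z v -> Lam1z r -> Lam0 (wadd u v) ->
  ((wadd u r = W0 \/ Lam0 (wadd u r)) \/ (wadd v r = W0 \/ Lam0 (wadd v r))) ->
  Lam1z (wadd (wadd u v) r) ->
  [/\ ok u v, ok u r & ok u (wadd (wadd u v) r)].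
Proof.
move=> hu hv hr h0 hE hs.
have okv : ok u v.
  by case: hv => [hv|->]; [right; apply: conn_pair => //; right | left].
split => //.
  case: hr => [hr|->]; last by left.
  right; case: hE => [hE|hE]; first exact: conn_pair.
  case: hv => [hv|ev].
    apply: (@conn_trans _ v); first by apply: conn_pair => //; right.
    exact: conn_pair.
  move: hE h0 hs; rewrite ev wadd0 waddw0 => hE h0 hs.
  case: hE => [e|h0r]; first by move: (Lam1_neq0 hr); rewrite e.
  case: hs => [hs|es]; last by rewrite (wadd_eq0 es); apply: conn_opp.
  have c1 : connected u (wadd (wadd u W0) r).
    by apply: conn3 => //; [right|left|rewrite waddw0|rewrite waddw0].
  have c2 : connected r (wadd (wadd r W0) u).
    by apply: conn3 => //; [right|left; exact: (conn_Lam1l c1)|rewrite waddw0|rewrite waddw0 waddC].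
  move: c1 c2; rewrite !waddw0 (waddC r u) => c1 c2.
  exact: conn_trans c1 (conn_sym c2).
case: hs => [hs|->]; last by left.
by right; apply: conn3.
Qed.

Lemma hub p q r a b c : Tsp a p -> Tsp b q -> Tsp c r -> trip p q r <> 0 ->
  exists H, [/\ Lam1 H, ok H a, ok H b, ok H c & ok H (wadd (wadd a b) c)].
Proof.
move=> hp hq hr ne.
have p0 : p <> 0 by move=> e; apply: ne; rewrite e trip0l.
have q0 : q <> 0 by move=> e; apply: ne; rewrite e trip0m.
have r0 : r <> 0 by move=> e; apply: ne; rewrite e trip0r.
have za := Lam1z_vec hp p0; have zb := Lam1z_vec hq q0; have zc := Lam1z_vec hr r0.
have zs := Lam1z_vec (trip_w hp hq hr) ne.
have E1 : wadd a b = W0 \/ Lam0 (wadd a b).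
  case: (classic (wadd a b = W0)) => [|nw]; [by left|right].
  apply: Lam0_tens hp hq _ nw => e; apply: ne; exact: tens0_trip.
have E2 : (wadd a c = W0 \/ Lam0 (wadd a c)) \/ (wadd b c = W0 \/ Lam0 (wadd b c)).
  case: (classic (tens p r = 0)) => e1.
    case: (classic (tens q r = 0)) => e2.
      by exfalso; apply: ne; rewrite (tens0_swap p e2); apply: tens0_trip.
    right; case: (classic (wadd b c = W0)) => [|nw]; [by left|right].
    exact: Lam0_tens hq hr e2 nw.
  left; case: (classic (wadd a c = W0)) => [|nw]; [by left|right].
  exact: Lam0_tens hp hr e1 nw.
case: E1 => [e|h0].
  have eb' := wadd_eq0 e; rewrite e wadd0.
  case: (classic (a = W0)) => [ea|na].
    have ebb : b = W0 by rewrite eb' ea wopp0.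
    case: (classic (c = W0)) => [ec|nc].
      exfalso; apply: ne; case: Hsp => [_ _ h3 _]; apply: h3.
      - by rewrite -ea. - by rewrite -ebb. - by rewrite -ec.
    have hc := Lam1_vec hr r0 nc.
    by exists c; split => //; [left|left|right; apply: conn_refl|right; apply: conn_refl].
  have ha := Lam1_vec hp p0 na.
  have okc : ok a c.
    case: zc => [hc|->]; last by left.
    right; case: E2 => [E|E]; first exact: conn_pair.
    case: E => [e2|h02].
      by rewrite (wadd_eq0 e2) eb' woppK; apply: conn_refl.
    apply: (@conn_trans _ b); first by rewrite eb'; apply: conn_opp.
    by apply: conn_pair => //; [rewrite eb'; apply: Hs1|right].
  exists a; split => //; [by right; apply: conn_refl | by right; rewrite eb'; apply: conn_opp].
case: (classic (a = W0)) => [ea|na].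
  have nb : b <> W0 by move=> eb2; apply: (Lam0_neq0 h0); rewrite ea eb2 wadd0.
  have hb := Lam1_vec hq q0 nb.
  have [h1 h2 h3] : [/\ ok b a, ok b c & ok b (wadd (wadd b a) c)].
    by apply: hub_aux => //; [rewrite waddC | move: E2; tauto | rewrite (waddC b)].
  exists b; split => //; first by right; apply: conn_refl.
  by rewrite (waddC a).
have ha := Lam1_vec hp p0 na.
have [h1 h2 h3] := hub_aux ha zb zc h0 E2 zs.
by exists a; split => //; right; apply: conn_refl.
Qed.

Definition Good (al w : W) := w = W0 \/ Lam1_of br0 act H0 al w.

Lemma LB al p q r a b c w : Tsp a p -> Tsp b q -> Tsp c r -> trip p q r <> 0 ->
  (w = a \/ w = b \/ w = c \/ w = wadd (wadd a b) c) -> w <> W0 -> Good al w ->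
  [/\ Good al a, Good al b, Good al c & Good al (wadd (wadd a b) c)].
Proof.
move=> hp hq hr ne hw nw [//|[_ hal]].
have [H [hH oa ob oc os]] := hub hp hq hr ne.
have hHw : connected H w.
  move: nw; case: hw => [->|[->|[->|->]]] nw;
    [case: oa => // /nw []|case: ob => // /nw []|case: oc => // /nw []|case: os => // /nw []].
have alH : connected al H := conn_trans hal (conn_sym hHw).
have G : forall x, ok H x -> Good al x.
  move=> x [->|hx]; [by left | right; split; [exact: conn_Lam1r hx | exact: conn_trans alH hx]].
by split; apply: G.
Qed.

Lemma Good0 al : Good al W0. Proof. by left. Qed.

Lemma gen_b3 al a b c b1 b2 b3 : Tsp b1 a -> Tsp b2 b -> Tsp b3 c ->
  Good al b1 -> wadd (wadd b1 b2) b3 = W0 -> trip a b c <> 0 -> b3 <> W0.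
Proof.
move=> ha hb hc g1 e ne e3; move: e; rewrite e3 waddw0 => /wadd_eq0 e2.
case: Hsp => [_ _ h3 h4].
case: g1 => [e1|[l1 _]].
  by apply: ne; move: ha hb hc; rewrite e2 e1 wopp0 e3; apply: h3.
by apply: ne; move: hb hc; rewrite e2 e3; apply: (h4 b1).
Qed.

Lemma wpt (x y : W) : x = y -> forall h, x h = y h.
Proof. by move=> ->. Qed.

Lemma P1 al a b c b1 b2 b3 y z mu nu : Tsp b1 a -> Tsp b2 b -> Tsp b3 c ->
  Good al b1 -> Good al b2 -> Good al b3 -> wadd (wadd b1 b2) b3 = W0 ->
  Tsp mu y -> Tsp nu z -> trip (trip a b c) y z <> 0 ->
  [/\ Good al mu, Good al nu & Good al (wadd mu nu)].
Proof.
move=> ha hb hc g1 g2 g3 e hy hz ne.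
have nx : trip a b c <> 0 by move=> ex; apply: ne; rewrite ex trip0l.
have n3 := gen_b3 ha hb hc g1 e nx.
have hx : Tsp W0 (trip a b c) by rewrite -e; apply: trip_w.
have E := wpt e; rewrite /wadd /w0 in E.
have nz : ~ (mu = W0 /\ nu = W0).
  case=> e1 e2; apply: ne; case: Hsp => [_ _ h3 _]; apply: h3 => //; by [rewrite -e1|rewrite -e2].
have fin : forall w, (w = mu \/ w = nu \/ w = wadd mu nu) -> w <> W0 -> Good al w ->
    [/\ Good al mu, Good al nu & Good al (wadd mu nu)].
  move=> w hw nw gw.
  have hw' : w = W0 \/ w = mu \/ w = nu \/ w = wadd (wadd W0 mu) nu by rewrite wadd0; tauto.
  have [_ g4 g5 g6] := LB hx hy hz ne hw' nw gw.
  by move: g6; rewrite wadd0.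
have fin2 : Good al mu -> Good al nu -> [/\ Good al mu, Good al nu & Good al (wadd mu nu)].
  move=> gm gn; case: (classic (mu = W0)) => [em|nm]; last by apply: (fin mu); tauto.
  case: (classic (nu = W0)) => [en|nn]; last by apply: (fin nu); tauto.
  by exfalso; apply: nz.
have fin3 : Good al nu -> Good al (wadd mu nu) -> [/\ Good al mu, Good al nu & Good al (wadd mu nu)].
  move=> gn gs; case: (classic (nu = W0)) => [en|nn]; last by apply: (fin nu); tauto.
  case: (classic (wadd mu nu = W0)) => [es|ns]; last by apply: (fin (wadd mu nu)); tauto.
  by exfalso; apply: nz; split => //; move: es; rewrite en waddw0.
have fin4 : Good al mu -> Good al (wadd mu nu) -> [/\ Good al mu, Good al nu & Good al (wadd mu nu)].
  move=> gm gs; case: (classic (mu = W0)) => [em|nm]; last by apply: (fin mu); tauto.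
  case: (classic (wadd mu nu = W0)) => [es|ns]; last by apply: (fin (wadd mu nu)); tauto.
  by exfalso; apply: nz; split => //; move: es; rewrite em wadd0.
have G3 : Good al b3 by [].
have id2 := Lid2 a b c y z.
case: (classic (trip a b (trip c y z) = 0)) => [e1|n1]; last first.
  have nW : trip c y z <> 0 by move=> ew; apply: n1; rewrite ew trip0r.
  have [_ gm gn _] := LB hc hy hz nW (w := b3) (or_introl erefl) n3 g3.
  exact: fin2.
case: (classic (trip (trip a b y) c z = 0)) => [e2|n2]; last first.
  have [_ _ gn gs] := LB (trip_w ha hb hy) hc hz n2 (w := b3) (or_intror (or_introl erefl)) n3 g3.
  apply: fin3 => //; move: gs; congr (Good al _); apply: wext => h; rewrite /wadd.
  by move: (E h) => Eh; rewrite -[RHS]add0r -Eh; ring.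
case: (classic (trip (trip a b z) c y = 0)) => [e3|n3'].
  case: (classic (trip (trip a b z) y c = 0)) => [e4|n4].
    by exfalso; apply: ne; move: id2; rewrite e1 e2 e3 e4 !subr0 addr0 => ->.
  have [_ gm _ gs] := LB (trip_w ha hb hz) hy hc n4 (w := b3) (or_intror (or_intror (or_introl erefl))) n3 g3.
  apply: fin4 => //; move: gs; congr (Good al _); apply: wext => h; rewrite /wadd.
  by move: (E h) => Eh; rewrite -[RHS]add0r -Eh; ring.
have [_ _ gm gs] := LB (trip_w ha hb hz) hc hy n3' (w := b3) (or_intror (or_introl erefl)) n3 g3.
apply: fin4 => //; move: gs; congr (Good al _); apply: wext => h; rewrite /wadd.
by move: (E h) => Eh; rewrite -[RHS]add0r -Eh; ring.
Qed.

Lemma P2 al a b c b1 b2 b3 y z mu nu : Tsp b1 a -> Tsp b2 b -> Tsp b3 c ->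
  Good al b1 -> Good al b2 -> Good al b3 -> wadd (wadd b1 b2) b3 = W0 ->
  Tsp mu y -> Tsp nu z -> trip y (trip a b c) z <> 0 ->
  [/\ Good al mu, Good al nu & Good al (wadd mu nu)].
Proof.
move=> ha hb hc g1 g2 g3 e hy hz ne.
have nx : trip a b c <> 0 by move=> ex; apply: ne; rewrite ex trip0m.
have n3 := gen_b3 ha hb hc g1 e nx.
have hx : Tsp W0 (trip a b c) by rewrite -e; apply: trip_w.
have E := wpt e; rewrite /wadd /w0 in E.
have nz : ~ (mu = W0 /\ nu = W0).
  case=> e1 e2; apply: ne; case: Hsp => [_ _ h3 _]; apply: h3 => //; by [rewrite -e1|rewrite -e2].
have fin : forall w, (w = mu \/ w = nu \/ w = wadd mu nu) -> w <> W0 -> Good al w ->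
    [/\ Good al mu, Good al nu & Good al (wadd mu nu)].
  move=> w hw nw gw.
  have hw' : w = mu \/ w = W0 \/ w = nu \/ w = wadd (wadd mu W0) nu by rewrite waddw0; tauto.
  have [g4 _ g5 g6] := LB hy hx hz ne hw' nw gw.
  by move: g6; rewrite waddw0.
have fin3 : Good al nu -> Good al (wadd mu nu) -> [/\ Good al mu, Good al nu & Good al (wadd mu nu)].
  move=> gn gs; case: (classic (nu = W0)) => [en|nn]; last by apply: (fin nu); tauto.
  case: (classic (wadd mu nu = W0)) => [es|ns]; last by apply: (fin (wadd mu nu)); tauto.
  by exfalso; apply: nz; split => //; move: es; rewrite en waddw0.
have finm : mu = W0 -> Good al nu -> [/\ Good al mu, Good al nu & Good al (wadd mu nu)].
  move=> em gn; case: (classic (nu = W0)) => [en|nn]; last by apply: (fin nu); tauto.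
  by exfalso; apply: nz.
have id1 := Lid1 y a b c z.
case: (classic (trip (trip y a b) c z = 0)) => [e1|n1]; last first.
  have [_ _ gn gs] := LB (trip_w hy ha hb) hc hz n1 (w := b3) (or_intror (or_introl erefl)) n3 g3.
  apply: fin3 => //; move: gs; congr (Good al _); apply: wext => h; rewrite /wadd.
  by move: (E h) => Eh; rewrite -[RHS]add0r -Eh; ring.
case: (classic (trip (trip y b a) c z = 0)) => [e2|n2]; last first.
  have [_ _ gn gs] := LB (trip_w hy hb ha) hc hz n2 (w := b3) (or_intror (or_introl erefl)) n3 g3.
  apply: fin3 => //; move: gs; congr (Good al _); apply: wext => h; rewrite /wadd.
  by move: (E h) => Eh; rewrite -[RHS]add0r -Eh; ring.
case: (classic (trip (trip y c a) b z = 0)) => [e3|n3']; last first.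
  have nR : trip y c a <> 0 by move=> ew; apply: n3'; rewrite ew trip0l.
  have [gm _ _ _] := LB hy hc ha nR (w := b3) (or_intror (or_introl erefl)) n3 g3.
  case: (classic (mu = W0)) => [em|nm]; last by apply: (fin mu); tauto.
  case: (classic (b2 = W0)) => [e2'|n2'].
    have eR : wadd (wadd mu b3) b1 = W0.
      apply: wext => h; move: (E h); rewrite em e2' /wadd => Eh; rewrite -[RHS]Eh /w0; ring.
    have [_ gn _] := P1 hy hc ha gm g3 g1 eR hb hz n3'.
    exact: finm.
  have [_ _ gn _] := LB (trip_w hy hc ha) hb hz n3' (w := b2) (or_intror (or_introl erefl)) n2' g2.
  exact: finm.
case: (classic (trip (trip y c b) a z = 0)) => [e4|n4].
  by exfalso; apply: ne; rewrite id1 e1 e2 e3 e4 !subr0 addr0.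
have nR : trip y c b <> 0 by move=> ew; apply: n4; rewrite ew trip0l.
have [gm _ _ _] := LB hy hc hb nR (w := b3) (or_intror (or_introl erefl)) n3 g3.
case: (classic (mu = W0)) => [em|nm]; last by apply: (fin mu); tauto.
case: (classic (b1 = W0)) => [e1'|n1'].
  have eR : wadd (wadd mu b3) b2 = W0.
    apply: wext => h; move: (E h); rewrite em e1' /wadd => Eh; rewrite -[RHS]Eh /w0; ring.
  have [_ gn _] := P1 hy hc hb gm g3 g2 eR ha hz n4.
  exact: finm.
have [_ _ gn _] := LB (trip_w hy hc hb) ha hz n4 (w := b1) (or_intror (or_introl erefl)) n1' g1.
exact: finm.
Qed.

Lemma P3 al a b c b1 b2 b3 y z mu nu : Tsp b1 a -> Tsp b2 b -> Tsp b3 c ->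
  Good al b1 -> Good al b2 -> Good al b3 -> wadd (wadd b1 b2) b3 = W0 ->
  Tsp mu y -> Tsp nu z -> trip y z (trip a b c) <> 0 ->
  [/\ Good al mu, Good al nu & Good al (wadd mu nu)].
Proof.
move=> ha hb hc g1 g2 g3 e hy hz ne.
have nx : trip a b c <> 0 by move=> ex; apply: ne; rewrite ex trip0r.
have n3 := gen_b3 ha hb hc g1 e nx.
have hx : Tsp W0 (trip a b c) by rewrite -e; apply: trip_w.
have E := wpt e; rewrite /wadd /w0 in E.
have ns : wadd mu nu <> W0.
  move=> es; have en := wadd_eq0 es; case: Hsp => [_ _ h3 h4].
  case: (classic (mu = W0)) => [em|nm].
    by apply: ne; apply: h3; rewrite -?em //; move: hz; rewrite en em wopp0.
  have y0 : y <> 0 by move=> ey; apply: ne; rewrite ey trip0l.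
  by apply: ne; apply: (h4 mu) => //; [exact: Lam1_vec hy y0 nm | rewrite -en].
have fin : forall w, (w = mu \/ w = nu \/ w = wadd mu nu) -> w <> W0 -> Good al w ->
    [/\ Good al mu, Good al nu & Good al (wadd mu nu)].
  move=> w hw nw gw.
  have hw' : w = mu \/ w = nu \/ w = W0 \/ w = wadd (wadd mu nu) W0 by rewrite waddw0; tauto.
  have [g4 g5 _ g6] := LB hy hz hx ne hw' nw gw.
  by move: g6; rewrite waddw0.
have finmn : Good al mu -> Good al nu -> [/\ Good al mu, Good al nu & Good al (wadd mu nu)].
  move=> gm gn; case: (classic (mu = W0)) => [em|nm]; last by apply: (fin mu); tauto.
  case: (classic (nu = W0)) => [en|nn]; last by apply: (fin nu); tauto.
  by exfalso; apply: ns; rewrite em en wadd0.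
have id2 := Lid2 y z a b c.
case: (classic (trip (trip y z a) b c = 0)) => [e1|n1]; last first.
  have [_ _ _ gs] := LB (trip_w hy hz ha) hb hc n1 (w := b3) (or_intror (or_intror (or_introl erefl))) n3 g3.
  apply: (fin (wadd mu nu)) => //; [tauto|]; move: gs; congr (Good al _); apply: wext => h; rewrite /wadd.
  by move: (E h) => Eh; rewrite -[RHS]add0r -Eh; ring.
case: (classic (trip (trip y z b) a c = 0)) => [e2|n2]; last first.
  have [_ _ _ gs] := LB (trip_w hy hz hb) ha hc n2 (w := b3) (or_intror (or_intror (or_introl erefl))) n3 g3.
  apply: (fin (wadd mu nu)) => //; [tauto|]; move: gs; congr (Good al _); apply: wext => h; rewrite /wadd.
  by move: (E h) => Eh; rewrite -[RHS]add0r -Eh; ring.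
case: (classic (trip (trip y z c) a b = 0)) => [e3|n3']; last first.
  have nR : trip y z c <> 0 by move=> ew; apply: n3'; rewrite ew trip0l.
  have [gm gn _ _] := LB hy hz hc nR (w := b3) (or_intror (or_intror (or_introl erefl))) n3 g3.
  exact: finmn.
case: (classic (trip (trip y z c) b a = 0)) => [e4|n4].
  by exfalso; apply: ne; rewrite id2 e1 e2 e3 e4 !subr0 addr0.
have nR : trip y z c <> 0 by move=> ew; apply: n4; rewrite ew trip0l.
have [gm gn _ _] := LB hy hz hc nR (w := b3) (or_intror (or_intror (or_introl erefl))) n3 g3.
exact: finmn.
Qed.

Local Notation I_cls := (I_cls trip br0 act H0).
Local Notation T0_Lam := (T0_Lam trip br0 act H0).
Local Notation V_Lam := (V_Lam br0 act H0).

Definition Gprop al x wx := [/\ Tsp wx x, Good al wx &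
  forall y z mu nu, Tsp mu y -> Tsp nu z ->
  [/\ trip x y z <> 0 -> [/\ Good al mu, Good al nu & Good al (wadd (wadd wx mu) nu)],
      trip y x z <> 0 -> [/\ Good al mu, Good al nu & Good al (wadd (wadd mu wx) nu)] &
      trip y z x <> 0 -> [/\ Good al mu, Good al nu & Good al (wadd (wadd mu nu) wx)]]].

Lemma Gprop_V al x g : Tsp g x -> Lam1_of br0 act H0 al g -> Gprop al x g.
Proof.
move=> hx hg; have gg : Good al g by right.
have ng : g <> W0 by case: hg => [[]].
split => // y z mu nu hy hz; split => ne.
- by have [] := LB (w := g) hx hy hz ne (or_introl erefl) ng gg.
- by have [] := LB (w := g) hy hx hz ne (or_intror (or_introl erefl)) ng gg.
- by have [] := LB (w := g) hy hz hx ne (or_intror (or_intror (or_introl erefl))) ng gg.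
Qed.

Lemma Gprop_T0 al a b c b1 b2 b3 : Tsp b1 a -> Tsp b2 b -> Tsp b3 c ->
  Good al b1 -> Good al b2 -> Good al b3 -> wadd (wadd b1 b2) b3 = W0 ->
  Gprop al (trip a b c) W0.
Proof.
move=> ha hb hc g1 g2 g3 e; split; [by rewrite -e; apply: trip_w | by left |].
move=> y z mu nu hy hz; split => ne.
- by rewrite wadd0; apply: (P1 ha hb hc).
- by rewrite waddw0; apply: (P2 ha hb hc).
- by rewrite waddw0; apply: (P3 ha hb hc).
Qed.

Lemma I_sub al : subspace (I_cls al).
Proof.
split.
- by exists 0, 0; split; [exact: kspan0|exact: kspan0|rewrite addr0].
- move=> x y [t0 [v [h1 h2 ->]]] [t0' [v' [h1' h2' ->]]].
  exists (t0 + t0'), (v + v'); split; [exact: kspanD|exact: kspanD|by rewrite addrACA].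
- move=> c x [t0 [v [h1 h2 ->]]]; exists (c *: t0), (c *: v).
  by split; [exact: kspanZ|exact: kspanZ|rewrite scalerDr].
Qed.

Lemma Good_or al b : Good al b -> Lam1_of br0 act H0 al b \/ b = W0.
Proof. by case; [right|left]. Qed.

Lemma core_in_I al x wx y z mu nu : Gprop al x wx -> Tsp mu y -> Tsp nu z ->
  [/\ I_cls al (trip x y z), I_cls al (trip y x z) & I_cls al (trip y z x)].
Proof.
move=> [hx gx hG] hy hz; have [G1' G2' G3'] := hG y z mu nu hy hz.
have key : forall P a1 a2 a3 p1 p2 p3, Tsp a1 p1 -> Tsp a2 p2 -> Tsp a3 p3 ->
    P = trip p1 p2 p3 -> (P <> 0 -> [/\ Good al a1, Good al a2, Good al a3 &
      Good al (wadd (wadd a1 a2) a3)]) -> I_cls al P.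
  move=> P a1 a2 a3 p1 p2 p3 h1 h2 h3 eP hP.
  case: (classic (P = 0)) => [->|nP]; first by case: (I_sub al).
  have [k1 k2 k3 ks] := hP nP.
  case: ks => [es|ls].
    exists P, 0; split; [|exact: kspan0|by rewrite addr0].
    apply: kspan1; exists a1, a2, a3, p1, p2, p3; split => //.
    by split; [apply: Good_or|split; apply: Good_or].
  exists 0, P; split; [exact: kspan0| |by rewrite add0r].
  apply: kspan1; exists (wadd (wadd a1 a2) a3); split => //.
  by rewrite eP; apply: trip_w.
split.
- apply: (key _ wx mu nu x y z) => // nP; have [] := G1' nP; split => //.
- apply: (key _ mu wx nu y x z) => // nP; have [] := G2' nP; split => //.
- apply: (key _ mu nu wx y z x) => // nP; have [] := G3' nP; split => //.
Qed.

Lemma pre_sub (F : T -> T) (Q : T -> Prop) : lin_map F -> subspace Q ->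
  subspace (fun x => Q (F x)).
Proof.
move=> hF [Q0 QD QZ]; split.
- by rewrite (lin0 hF).
- by move=> x y hx hy; rewrite (linD hF); apply: QD.
- by move=> a x hx; rewrite (linZ hF); apply: QZ.
Qed.

Lemma Z0sub : subspace (fun t : T => t = 0).
Proof. by split; [|move=> x y -> ->; rewrite addr0|move=> a x ->; rewrite scaler0]. Qed.

Lemma split_red (Q : T -> Prop) : subspace Q -> (forall w t, Tsp w t -> Q t) ->
  forall t, Q t.
Proof.
move=> hQ h t; case: Hsp => [h1 _ _ _]; have [s [hs ->]] := h1 t.
by apply: sub_sum => // p hp; apply: (h p.1); case: (hs p hp).
Qed.

Lemma I_red al (Q : T -> Prop) : subspace Q -> (forall x wx, Gprop al x wx -> Q x) ->
  forall x, I_cls al x -> Q x.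
Proof.
move=> hQ h x [t0 [v [h0 hv ->]]]; case: (hQ) => [_ QD _]; apply: QD.
  apply: (kspan_ind hQ) h0 => t [b1 [b2 [b3 [a [b [c [[g1 [g2 g3]] e [ha [hb hc]] ->]]]]]]].
  have G : forall bb, (Lam1_of br0 act H0 al bb \/ bb = W0) -> Good al bb by move=> bb; case; [right|left].
  exact: (h _ _ (Gprop_T0 ha hb hc (G _ g1) (G _ g2) (G _ g3) e)).
apply: (kspan_ind hQ) hv => t [g [hg ht]].
exact: (h _ _ (Gprop_V ht hg)).
Qed.

Lemma I_ideal al : ideal trip (I_cls al).
Proof.
split; first exact: I_sub.
move=> x y z hx; split.
- apply: (I_red (Q := fun x => I_cls al (trip x y z))) hx; first exact: (pre_sub (tL1 y z) (I_sub al)).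
  move=> x' wx hG.
  apply: (split_red (Q := fun y => I_cls al (trip x' y z))); first exact: (pre_sub (tL2 x' z) (I_sub al)).
  move=> mu y' hy.
  apply: (split_red (Q := fun z => I_cls al (trip x' y' z))); first exact: (pre_sub (tL3 x' y') (I_sub al)).
  move=> nu z' hz; by case: (core_in_I hG hy hz).
- apply: (I_red (Q := fun x => I_cls al (trip y x z))) hx; first exact: (pre_sub (tL2 y z) (I_sub al)).
  move=> x' wx hG.
  apply: (split_red (Q := fun y => I_cls al (trip y x' z))); first exact: (pre_sub (tL1 x' z) (I_sub al)).
  move=> mu y' hy.
  apply: (split_red (Q := fun z => I_cls al (trip y' x' z))); first exact: (pre_sub (tL3 y' x') (I_sub al)).
  move=> nu z' hz; by case: (core_in_I hG hy hz).
- apply: (I_red (Q := fun x => I_cls al (trip y z x))) hx; first exact: (pre_sub (tL3 y z) (I_sub al)).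
  move=> x' wx hG.
  apply: (split_red (Q := fun y => I_cls al (trip y z x'))); first exact: (pre_sub (tL1 z x') (I_sub al)).
  move=> mu y' hy.
  apply: (split_red (Q := fun z => I_cls al (trip y' z x'))); first exact: (pre_sub (tL2 y' x') (I_sub al)).
  move=> nu z' hz; by case: (core_in_I hG hy hz).
Qed.

Lemma both_conn al be w : Good al w -> Good be w -> w <> W0 -> connected al be.
Proof.
by move=> [//|[_ ha]] [//|[_ hb]] _; apply: conn_trans ha (conn_sym hb).
Qed.

Lemma orth_core al be x wx z wz y mu : ~ connected al be ->
  Gprop al x wx -> Gprop be z wz -> Tsp mu y ->
  [/\ trip x y z = 0, trip x z y = 0 & trip y x z = 0].
Proof.
move=> nc [hx gx Gx] [hz gz Gz] hy.
have fin' : Good al wx -> Good be wx -> Good al mu -> Good be mu -> Good al wz -> Good be wz ->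
   [/\ Tsp W0 x, Tsp W0 y & Tsp W0 z].
  move=> a1 a2 b1 b2 c1 c2.
  have ea : wx = W0 by apply: NNPP => e; apply: nc; apply: (both_conn a1 a2 e).
  have eb : mu = W0 by apply: NNPP => e; apply: nc; apply: (both_conn b1 b2 e).
  have ec : wz = W0 by apply: NNPP => e; apply: nc; apply: (both_conn c1 c2 e).
  by split; [rewrite -ea|rewrite -eb|rewrite -ec].
case: Hsp => [_ _ h3 _].
split; apply: NNPP => ne.
- have [Gx1 _ _] := Gx y z mu wz hy hz; have [k1 k2 _] := Gx1 ne.
  have [_ _ Gz3] := Gz x y wx mu hx hy; have [j1 j2 _] := Gz3 ne.
  have [t1 t2 t3] := fin' gx j1 k1 j2 k2 gz.
  by apply: ne; apply: h3.
- have [Gx1 _ _] := Gx z y wz mu hz hy; have [k1 k2 _] := Gx1 ne.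
  have [_ Gz2 _] := Gz x y wx mu hx hy; have [j1 j2 _] := Gz2 ne.
  have [t1 t2 t3] := fin' gx j1 k2 j2 k1 gz.
  by apply: ne; apply: h3.
- have [_ Gx2 _] := Gx y z mu wz hy hz; have [k1 k2 _] := Gx2 ne.
  have [_ _ Gz3] := Gz y x mu wx hy hx; have [j1 j2 _] := Gz3 ne.
  have [t1 t2 t3] := fin' gx j2 k1 j1 k2 gz.
  by apply: ne; apply: h3.
Qed.

Lemma orth al be : ~ connected al be -> forall x y z, I_cls al x -> I_cls be z ->
  [/\ trip x y z = 0, trip x z y = 0 & trip y x z = 0].
Proof.
move=> nc x y z hx hz; split.
- apply: (I_red (Q := fun x => trip x y z = 0)) hx; first exact: (pre_sub (tL1 y z) Z0sub).
  move=> x' wx hGx.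
  apply: (I_red (Q := fun z => trip x' y z = 0)) hz; first exact: (pre_sub (tL3 x' y) Z0sub).
  move=> z' wz hGz.
  apply: (split_red (Q := fun y => trip x' y z' = 0)); first exact: (pre_sub (tL2 x' z') Z0sub).
  by move=> mu y' hy; case: (orth_core nc hGx hGz hy).
- apply: (I_red (Q := fun x => trip x z y = 0)) hx; first exact: (pre_sub (tL1 z y) Z0sub).
  move=> x' wx hGx.
  apply: (I_red (Q := fun z => trip x' z y = 0)) hz; first exact: (pre_sub (tL2 x' y) Z0sub).
  move=> z' wz hGz.
  apply: (split_red (Q := fun y => trip x' z' y = 0)); first exact: (pre_sub (tL3 x' z') Z0sub).
  by move=> mu y' hy; case: (orth_core nc hGx hGz hy).
- apply: (I_red (Q := fun x => trip y x z = 0)) hx; first exact: (pre_sub (tL2 y z) Z0sub).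
  move=> x' wx hGx.
  apply: (I_red (Q := fun z => trip y x' z = 0)) hz; first exact: (pre_sub (tL3 y x') Z0sub).
  move=> z' wz hGz.
  apply: (split_red (Q := fun y => trip y x' z' = 0)); first exact: (pre_sub (tL1 x' z') Z0sub).
  by move=> mu y' hy; case: (orth_core nc hGx hGz hy).
Qed.

Lemma Lam1_of_eq al be : connected al be ->
  Lam1_of br0 act H0 al = Lam1_of br0 act H0 be.
Proof.
move=> h; apply: functional_extensionality => g; apply: propositional_extensionality.
split=> [[h1 h2]|[h1 h2]]; split => //; [exact: conn_trans (conn_sym h) h2 | exact: conn_trans h h2].
Qed.

Lemma I_eq al be : connected al be -> forall t, I_cls al t <-> I_cls be t.
Proof. by move=> h t; rewrite /Defs.I_cls /Defs.T0_Lam /Defs.V_Lam (Lam1_of_eq h). Qed.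

Lemma T0_in al t : T0_Lam al t -> Tsp W0 t.
Proof.
apply: (kspan_ind (Tsp_sub W0)) => x [b1 [b2 [b3 [a [b [c [_ e [ha [hb hc]] ->]]]]]]].
by rewrite -e; apply: trip_w.
Qed.

Lemma V_list al t : V_Lam al t -> exists s : seq (W * T),
  (forall q, Lin q s -> Lam1 q.1 /\ Tsp q.1 q.2) /\ t = \sum_(q <- s) q.2.
Proof.
move=> [s [hs ->]]; elim: s hs => [|p s IH] hs.
  by exists [::]; split => //; rewrite !big_nil.
have [s' [h' e']] := IH (fun q hq => hs q (or_intror hq)).
have [g [[hg _] ht]] := hs p (or_introl erefl).
exists ((g, p.1 *: p.2) :: s'); split.
  move=> q [<-|hq]; last exact: h'.
  by split => //; case: (Tsp_sub g) => [_ _ hZ]; apply: hZ.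
by rewrite !big_cons e'.
Qed.

Fixpoint distw (s : seq (W * T)) : Prop :=
  match s with [::] => True | p :: r => (forall q, Lin q r -> q.1 <> p.1) /\ distw r end.

Lemma Lin_nth (A : Type) (d : A) r j : (j < size r)%N -> Lin (nth d r j) r.
Proof. elim: r j => [|x r IH] [|j] //= hj; [by left | by right; apply: IH]. Qed.

Lemma distw_nth s : distw s -> forall i j, (i < size s)%N -> (j < size s)%N -> i <> j ->
  (nth (W0, 0) s i).1 <> (nth (W0, 0) s j).1.
Proof.
elim: s => [|p r IH] //= [hp hr] [|i] [|j] //= hi hj nij.
- by move=> e; apply: (hp _ (Lin_nth (W0, 0) hj)); rewrite e.
- by apply: (hp _ (Lin_nth (W0, 0) hi)).
- by apply: IH => // e; apply: nij; rewrite e.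
Qed.

Definition wprops (s : seq (W * T)) := forall q, Lin q s -> Lam1 q.1 /\ Tsp q.1 q.2.

Lemma insert_w r p : distw r -> wprops r -> Lam1 p.1 -> Tsp p.1 p.2 ->
  exists r', [/\ distw r', wprops r', \sum_(q <- r') q.2 = p.2 + \sum_(q <- r) q.2 &
     (forall q, Lin q r' -> q.1 = p.1 \/ exists q', Lin q' r /\ q'.1 = q.1)].
Proof.
elim: r => [|q r IH] hd hw hp1 hp2.
  exists [:: p]; split => //.
  - by move=> q [<-|].
  - by rewrite big_cons !big_nil.
  - by move=> q [<-|]; [left|].
case: hd => [hq hd].
case: (classic (q.1 = p.1)) => [e|ne].
  exists ((q.1, q.2 + p.2) :: r); split => //.
  - move=> q' [<-|hq']; last exact: (hw q' (or_intror hq')).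
    have [l1 t1] := hw q (or_introl erefl); split => //=.
    by case: (Tsp_sub q.1) => [_ hD _]; apply: hD => //; rewrite e.
  - by rewrite !big_cons /= addrA (addrC p.2).
  - move=> q' [<-|hq']; first by right; exists q; split => //; left.
    by right; exists q'; split => //; right.
have [r' [hd' hw' hs' ho']] := IH hd (fun q' h => hw q' (or_intror h)) hp1 hp2.
exists (q :: r'); split.
- split => // q' hq'; case: (ho' q' hq') => [->|[q'' [h1 <-]]]; first by move=> e; apply: ne.
  exact: hq.
- move=> q' [<-|hq']; [exact: (hw q (or_introl erefl)) | exact: hw'].
- by rewrite !big_cons hs' addrCA.
- move=> q' [<-|hq']; first by right; exists q; split => //; left.
  case: (ho' q' hq') => [->|[q'' [h1 h2]]]; first by left.
  by right; exists q''; split => //; right.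
Qed.

Lemma group s : wprops s -> exists s', [/\ distw s', wprops s' &
  \sum_(q <- s') q.2 = \sum_(q <- s) q.2].
Proof.
elim: s => [|p s IH] hw; first by exists [::]; split.
have [s' [hd hw' he]] := IH (fun q h => hw q (or_intror h)).
have [hp1 hp2] := hw p (or_introl erefl).
have [r' [hd' hw'' hs' _]] := insert_w hd hw' hp1 hp2.
by exists r'; split => //; rewrite hs' he big_cons.
Qed.

Lemma dsum al t : T0_Lam al t -> V_Lam al t -> t = 0.
Proof.
move=> h0 hv; have t0 := T0_in h0.
have [s [hs et]] := V_list hv.
have [s' [hd hw he]] := group hs.
case: Hsp => [_ h2 _ _].
have hL : forall q, Lin q ((W0, - t) :: s') -> Lam1z q.1 /\ Tsp q.1 q.2.
  move=> q [<-|hq]; first by split; [right|case: (Tsp_sub W0) => [_ _ hZ]; rewrite -scaleN1r; apply: hZ].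
  by have [l1 t1] := hw q hq; split => //; left.
have hD : distw ((W0, - t) :: s') by split => // q hq; exact: (Lam1_neq0 (hw q hq).1).
have hS : \sum_(q <- (W0, - t) :: s') q.2 = 0 by rewrite big_cons /= he -et addNr.
have := h2 ((W0, - t) :: s') hL (distw_nth hD) hS (W0, - t) (or_introl erefl).
by move=> /= /eqP; rewrite oppr_eq0 => /eqP.
Qed.

Definition Iunion (x : T) := exists al, Lam1 al /\ I_cls al x.

Lemma zs_in t : zero_span trip act H0 Lam1 t -> kspan Iunion t.
Proof.
apply: (kspan_ind (kspan_sub Iunion)) => x [b1 [b2 [b3 [a [b [c [[g1 [g2 g3]] e [ha [hb hc]] ->]]]]]]].
case: (classic (trip a b c = 0)) => [->|ne]; first exact: kspan0.
have G : forall w, (w = b1 \/ w = b2 \/ w = b3) -> w <> W0 -> Lam1 w -> kspan Iunion (trip a b c).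
  move=> w hw nw lw; have gw : Good w w by right; split => //; apply: conn_refl.
  have hw' : w = b1 \/ w = b2 \/ w = b3 \/ w = wadd (wadd b1 b2) b3 by tauto.
  have [k1 k2 k3 _] := LB ha hb hc ne hw' nw gw.
  apply: kspan1; exists w; split => //.
  exists (trip a b c), 0; split; [|exact: kspan0|by rewrite addr0].
  apply: kspan1; exists b1, b2, b3, a, b, c; split => //.
  by split; [apply: Good_or|split; apply: Good_or].
case: g1 => [l1|e1]; first by apply: (G b1) => //; [left|exact: Lam1_neq0].
case: g2 => [l2|e2]; first by apply: (G b2) => //; [right; left|exact: Lam1_neq0].
case: g3 => [l3|e3]; first by apply: (G b3) => //; [right; right|exact: Lam1_neq0].
exfalso; apply: ne; case: Hsp => [_ _ h3 _]; apply: h3.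
by rewrite -e1. by rewrite -e2. by rewrite -e3.
Qed.

Lemma decomp (U : T -> Prop) : subspace U ->
  (forall t, Tsp W0 t -> exists u s, [/\ U u, zero_span trip act H0 Lam1 s & t = u + s]) ->
  forall t, exists u w, [/\ U u, kspan Iunion w & t = u + w].
Proof.
move=> [U0 UD UZ] hU t; case: Hsp => [h1 _ _ _]; have [s [hs ->]] := h1 t.
elim: s hs => [|p s IH] hs.
  by exists 0, 0; split => //; [exact: kspan0|rewrite big_nil addr0].
rewrite big_cons.
have [u [w [hu hw ->]]] := IH (fun q h => hs q (or_intror h)).
have [z1 z2] := hs p (or_introl erefl).
case: (classic (p.1 = W0)) => [e|ne].
  have tp : Tsp W0 p.2 by rewrite -e.
  have [u' [s' [hu' hs' ->]]] := hU p.2 tp.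
  exists (u' + u), (s' + w); split; [exact: UD|apply: kspanD => //; exact: zs_in|by rewrite addrACA].
case: z1 => [l1|]; last by [].
exists u, (p.2 + w); split => //; last by rewrite addrCA.
apply: kspanD => //; apply: kspan1; exists p.1; split => //.
exists 0, p.2; split; [exact: kspan0| |by rewrite add0r].
by apply: kspan1; exists p.1; split => //; split => //; apply: conn_refl.
Qed.

End Main.


Theorem theorem3p2 (K : fieldType) (T : lmodType K) (trip : T -> T -> T -> T)
    (L0 : lmodType K) (tens : T -> T -> L0) (br0 : L0 -> L0 -> L0)
    (act : T -> L0 -> T) (H0 : L0 -> Prop) (U : T -> Prop) :
  leibniz_triple trip ->
  standard_embedding trip tens br0 act ->
  max_abelian br0 H0 ->
  split_LTS trip act H0 ->
  symmetric_set H0 (Lam1 act H0) ->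
  symmetric_set H0 (Lam0 br0 H0) ->
  (* U is a vector space complement in T_0 of zero_span (Lam1) *)
  subspace U ->
  (forall u, U u -> Tsp act H0 (w0 H0) u) ->
  (forall t, U t -> zero_span trip act H0 (Lam1 act H0) t -> t = 0) ->
  (forall t, Tsp act H0 (w0 H0) t ->
     exists u s, [/\ U u, zero_span trip act H0 (Lam1 act H0) s & t = u + s]) ->
  [/\ (* T = U + sum_[alpha] I_[alpha] *)
      (forall t, exists u w, [/\ U u,
          kspan (fun x => exists al, Lam1 act H0 al /\ I_cls trip br0 act H0 al x) w
        & t = u + w]),
      (* each I_[alpha] is an ideal, and the sum T_{0,Lam1_a} + V_{Lam1_a} is direct *)
      (forall al, Lam1 act H0 al ->
          ideal trip (I_cls trip br0 act H0 al) /\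
          (forall t, T0_Lam trip br0 act H0 al t -> V_Lam br0 act H0 al t -> t = 0)),
      (* I_[alpha] depends only on the class [alpha] *)
      (forall al be, connected br0 act H0 al be ->
          forall t, I_cls trip br0 act H0 al t <-> I_cls trip br0 act H0 be t) &
      (* {I_a,T,I_b} = {I_a,I_b,T} = {T,I_a,I_b} = 0 for [a] <> [b] *)
      (forall al be, Lam1 act H0 al -> Lam1 act H0 be -> ~ connected br0 act H0 al be ->
          forall x y z, I_cls trip br0 act H0 al x -> I_cls trip br0 act H0 be z ->
            [/\ trip x y z = 0, trip x z y = 0 & trip y x z = 0])].
Proof.
move=> HL HS _ Hsp Hs1 Hs0 hU _ _ hUd; split.
- exact: (decomp HL HS Hsp Hs1 Hs0 hU hUd).
- move=> al _; split; first exact: (I_ideal HL HS Hsp Hs1 Hs0 al).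
  by move=> t; apply: (dsum HL HS Hsp).
- by move=> al be h t; apply: (I_eq trip Hs1 Hs0 h).
- by move=> al be _ _ nc; apply: (orth HL HS Hsp Hs1 Hs0 nc).
Qed.
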